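(* Let $\lambda>0$, $d_v>0$, $\epsilon\ge0$, $m=\lambda\pi d_v^2$, $k\ge0$, and let $r_1,\dots,r_k\ge0$ be given ranges, with $f(\mathbf x)$ the set of all orderings of $(r_1,\dots,r_k)$. With $A_i=\{\mathbf y\in\mathbb R^2:\ |\|\mathbf y\|_2-r_i|\le\epsilon\}$ and $|A_i|$ its Lebesgue measure, $$\mathbb P\big[\Delta_s(f(\mathbf x),F(\mathbf 0))\le\epsilon\big]\le m^k e^{-m}\prod_{i=1}^k\frac{|A_i|}{\pi d_v^2}.$$
   Context: Landmarks seen from the origin are the points of a homogeneous Poisson point process $\Phi_{\mathbf 0}$ of intensity $\lambda$ on $\mathbb R^2$; a landmark is visible from $\mathbf 0$ if its distance to $\mathbf 0$ is at most $d_v$, and $N_{\mathbf 0}$ is the number of visible landmarks. The random measurement $F(\mathbf 0)$ is the set of all vectors in $\mathbb R^{N_{\mathbf 0}}$ obtained by listing, in some order, the distances from $\mathbf 0$ to the visible landmarks. For vectors, $\Delta_v(\mathbf u,\mathbf w)=\|\mathbf u-\mathbf w\|_\infty$ if they have the same dimension (equal to $0$ if both are empty) and $\infty$ otherwise; for sets of vectors, $\Delta_s(f,F)=\min_{\mathbf u\in f,\mathbf w\in F}\Delta_v(\mathbf u,\mathbf w)$. *)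

(* Defs.v *)
From HB Require Import structures.
From mathcomp Require Import all_boot all_order all_algebra.
From mathcomp Require Import all_classical all_reals all_analysis.
Set Implicit Arguments. Unset Strict Implicit. Unset Printing Implicit Defensive.
Import Order.TTheory GRing.Theory Num.Theory.
Local Open Scope classical_set_scope.
Local Open Scope ring_scope.

Section Defs.
Variable R : realType.

Definition norm2 (y : R * R) : R := Num.sqrt (y.1 ^+ 2 + y.2 ^+ 2).

Definition leb2 : set (R * R) -> \bar R :=
  (@lebesgue_measure R \x @lebesgue_measure R)%E.

Definition Delta_v (u w : seq R) : \bar R :=
  if size u == size w then
    (\big[Num.max/0]_(i < size u) `|nth 0 u i - nth 0 w i|)%:E
  else +oo%E.

Definition Delta_s (f F : set (seq R)) : \bar R :=
  ereal_inf [set Delta_v u w | u in f & w in F].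

Definition orderings (s : seq R) : set (seq R) := [set u | perm_eq u s].

Definition disk (dv : R) : set (R * R) := [set y | norm2 y <= dv].

Definition annulus (r eps : R) : set (R * R) := [set y | `|norm2 y - r| <= eps].

(* F(0): all orderings of the distances from 0 to the visible landmarks
   X_0, ..., X_{N-1} *)
Definition measurement (T : Type) (N : T -> nat) (X : nat -> T -> R * R) (w : T)
  : set (seq R) := orderings [seq norm2 (X i w) | i <- iota 0 (N w)].

(* The visible part (inside the disk of radius dv) of a homogeneous PPP of
   intensity lam on R^2: the number N of visible landmarks is Poisson with mean
   m = lam * pi * dv^2, the landmarks X_0, X_1, ... are i.i.d. uniform on the
   disk, and N, X_0, X_1, ... are mutually independent. *)
Definition visible_PPP (d : measure_display) (T : measurableType d)
  (P : probability T R) (lam dv : R) (N : T -> nat) (X : nat -> T -> R * R) :=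
  let m := lam * pi * dv ^+ 2 in
  [/\ (forall n, measurable [set w | N w = n]),
      (forall i, measurable_fun setT (X i)),
      (forall n, P [set w | N w = n] = (m ^+ n * expR (- m) / n`!%:R)%:E),
      (forall i (B : set (R * R)), measurable B ->
         P [set w | B (X i w)] = (leb2 (B `&` disk dv) * ((pi * dv ^+ 2)^-1)%:E)%E) &
      (forall n (S : set nat) (B : nat -> set (R * R)), (forall i, measurable (B i)) ->
         P ([set w | S (N w)] `&` [set w | forall i, (i < n)%N -> B i (X i w)]) =
         (P [set w | S (N w)] * \prod_(i < n) P [set w | B i (X i w)])%E)].

End Defs.

(* Main.v *)
Require Import Defs.
From HB Require Import structures.
From mathcomp Require Import all_boot all_order all_algebra.
From mathcomp Require Import all_classical all_reals all_analysis.
From mathcomp Require Import measurable_realfun.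
From mathcomp Require Import fingroup perm.
Import Order.TTheory GRing.Theory Num.Theory.
Local Open Scope classical_set_scope.
Local Open Scope ring_scope.

Section Helpers.
Variable R : realType.

Lemma le_bigmax_seq (I : eqType) (s : seq I) (F : I -> R) x j :
  j \in s -> F j <= \big[Num.max/x]_(i <- s) F i.
Proof.
elim: s => [//|a s IH]; rewrite in_cons big_cons => /orP[/eqP->|js].
  by rewrite le_max lexx.
by rewrite le_max (IH js) orbT.
Qed.

Lemma Delta_v_le (u v : seq R) e : (Delta_v u v <= e%:E)%E ->
  size u = size v /\ forall i, (i < size u)%N -> `|nth 0 u i - nth 0 v i| <= e.
Proof.
rewrite /Delta_v; case: eqP => // H; rewrite lee_fin => Hm; split => // i Hi.
apply: le_trans Hm.
have := @le_bigmax_seq _ (index_enum 'I_(size u)) (fun j : 'I_(size u) => `|nth 0 u j - nth 0 v j|) 0 (Ordinal Hi).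
by rewrite mem_index_enum => /(_ isT).
Qed.

Lemma Delta_v_ge (u v : seq R) e : 0 <= e -> size u = size v ->
  (forall i, (i < size u)%N -> `|nth 0 u i - nth 0 v i| <= e) ->
  (Delta_v u v <= e%:E)%E.
Proof.
move=> e0 Hs H; rewrite /Delta_v Hs eqxx lee_fin.
rewrite -Hs; elim/big_ind: _ => //.
  by move=> a b ha hb; rewrite ge_max ha hb.
by move=> i _; apply: H.
Qed.

Lemma seq_min_attained (L : seq (\bar R)) x0 : x0 \in L ->
  exists2 x, x \in L & forall y, y \in L -> (x <= y)%E.
Proof.
elim: L x0 => [//|a L IH] x0 _.
case: L IH => [|b L] IH.
  by exists a; rewrite ?mem_head // => y; rewrite inE => /eqP->.
have [x xL Hx] := IH b (mem_head _ _).
have [ax|xa] := leP a x.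
  exists a; first exact: mem_head.
  move=> y; rewrite in_cons => /orP[/eqP->//|/Hx]; exact: le_trans.
exists x; first by rewrite in_cons xL orbT.
move=> y; rewrite in_cons => /orP[/eqP->|/Hx//]; exact: ltW.
Qed.

Lemma measurable_norm2 : measurable_fun setT (@norm2 R).
Proof.
rewrite /norm2.
have H : measurable_fun setT (fun y : R * R => y.1 ^+ 2 + y.2 ^+ 2).
  apply: measurable_funD; apply: measurable_funX.
    exact: measurable_fst.
  exact: measurable_snd.
exact: (measurableT_comp (@continuous_measurable_fun R _ (@sqrt_continuous R)) H).
Qed.

Lemma measurable_annulus (c e : R) : measurable (annulus c e).
Proof.
have mg : measurable_fun setT (fun y : R * R => `|norm2 y - c|).
  have H : measurable_fun setT (fun y : R * R => norm2 y - c).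
    apply: measurable_funB; [exact: measurable_norm2|exact: measurable_cst].
  exact: (measurableT_comp (@normr_measurable R setT) H).
have := mg measurableT _ (measurable_itv `]-oo, e]).
congr measurable; apply/seteqP; split => y /=; rewrite ?in_itv /=; by [move=> ->|case].
Qed.

Lemma measurable_disk (e : R) : measurable (disk e).
Proof.
have := measurable_norm2 measurableT _ (measurable_itv `]-oo, e]).
congr measurable; apply/seteqP; split => y /=; rewrite ?in_itv /=; by [move=> ->|case].
Qed.


Lemma event_char (r : seq R) (eps : R) (n : nat) (d : seq R) :
  size d = n -> 0 <= eps ->
  (Delta_s (orderings r) (orderings d) <= eps%:E)%E <->
  (size r = n /\ exists s : {perm 'I_(size r)},
     forall i : 'I_(size r), `|nth 0 d i - nth 0 r (s i)| <= eps).
Proof.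
move=> dn e0; split.
- move=> H.
  pose L := [seq Delta_v u v | u <- permutations r, v <- permutations d].
  have LS : forall x, x \in L -> [set Delta_v u v | u in orderings r & v in orderings d] x.
    move=> x /allpairsP [[u v] /= [hu hv ->]].
    by exists u; [rewrite /orderings /= -mem_permutations|exists v => //; rewrite /orderings /= -mem_permutations].
  have x0L : Delta_v r d \in L by apply: allpairs_f; rewrite mem_permutations.
  have [x xL xmin] := seq_min_attained _ _ x0L.
  have xe : (x <= eps%:E)%E.
    apply: le_trans H; apply: le_ereal_inf_tmp => y [u hu [v hv <-]].
    by apply: xmin; apply: allpairs_f; rewrite mem_permutations.
  have [u hu [v hv ux]] := LS x xL.
  move: xe; rewrite -ux => /Delta_v_le [suv Huv].
  have sur : size u = size r by apply: perm_size.
  have svd : size v = size d by apply: perm_size.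
  have srn : size r = n by rewrite -sur suv svd.
  split => //.
  have hd : size d == size r by rewrite dn srn.
  pose td := Tuple hd.
  have /tuple_permP [p Hp] : perm_eq u (in_tuple r) by [].
  have /tuple_permP [q Hq] : perm_eq v td by [].
  exists (q^-1 * p)%g => i.
  have Hj : ((q^-1)%g i < size u)%N by rewrite sur.
  have := Huv _ Hj; rewrite distrC permM.
  rewrite Hp Hq -!tnth_nth !tnth_mktuple permKV.
  by rewrite !(tnth_nth 0).
- move=> [srn [s Hs]].
  pose u := [tuple tnth (in_tuple r) (s i) | i < size r].
  have hu : perm_eq u (in_tuple r) by apply/tuple_permP; exists s.
  apply: ge_ereal_inf; exists (Delta_v u d).
    by exists u => //; exists d => //; rewrite /orderings /=.
  apply: Delta_v_ge => //; first by rewrite size_tuple srn dn.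
  move=> i; rewrite size_tuple => ir.
  have := Hs (Ordinal ir); rewrite distrC.
  rewrite -[nth 0 u i]/(nth 0 u (Ordinal ir)) -tnth_nth tnth_mktuple.
  by rewrite (tnth_nth 0).
Qed.


Lemma measure_bigsetU_le d (T : measurableType d) (mu : {measure set T -> \bar R})
  (I : Type) (s : seq I) (F : I -> set T) :
  (forall i, measurable (F i)) ->
  (mu (\big[setU/set0]_(i <- s) F i) <= \sum_(i <- s) mu (F i))%E.
Proof.
move=> mF; elim: s => [|a s IH]; first by rewrite !big_nil measure0.
rewrite !big_cons; apply: le_trans (measureU2 _ _ _) _ => //.
  exact: bigsetU_measurable.
by apply: leeD2l.
Qed.

Lemma lee_prod_ge0 (I : Type) (s : seq I) (f g : I -> \bar R) :
  (forall i, (0 <= f i)%E) -> (forall i, (f i <= g i)%E) ->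
  (\prod_(i <- s) f i <= \prod_(i <- s) g i)%E.
Proof.
move=> f0 fg; elim: s => [|a s IH]; first by rewrite !big_nil.
rewrite !big_cons; apply: lee_pmul => //; exact: prode_ge0.
Qed.


Lemma bigsetU_memP (T : Type) (I : eqType) (s : seq I) (F : I -> set T) x :
  (\big[setU/set0]_(i <- s) F i) x <-> exists2 i, i \in s & F i x.
Proof.
elim: s => [|a s IH]; first by rewrite big_nil; split => // [[]].
rewrite big_cons; split.
  case => [Fa|/IH [i iS Fi]]; first by exists a; rewrite ?mem_head.
  by exists i; rewrite // in_cons iS orbT.
move=> [i]; rewrite in_cons => /orP[/eqP-> Fa|iS Fi]; first by left.
by right; apply/IH; exists i.
Qed.

End Helpers.

Theorem lemma11 (R : realType) (d : measure_display) (T : measurableType d)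
  (P : probability T R) (lam dv eps : R) (N : T -> nat) (X : nat -> T -> R * R)
  (r : seq R) :
  0 < lam -> 0 < dv -> 0 <= eps -> all (fun ri => 0 <= ri) r ->
  visible_PPP P lam dv N X ->
  let m := lam * pi * dv ^+ 2 in
  let k := size r in
  (P [set w | (Delta_s (orderings r) (measurement N X w) <= eps%:E)%E]
   <= (m ^+ k * expR (- m))%:E *
      \prod_(i < k) (leb2 (annulus (nth 0%R r i) eps) * ((pi * dv ^+ 2)^-1)%:E))%E.
Proof.
move=> lam0 dv0 eps0 r0 H; cbv zeta.
set m := lam * pi * dv ^+ 2; set k := size r.
have [hN hX hPN hPX hind] := H.
pose dw := fun w => [seq norm2 (X i w) | i <- iota 0 (N w)].
have sdw : forall w, size (dw w) = N w by move=> w; rewrite size_map size_iota.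
have nth_dw : forall w i, (i < N w)%N -> nth 0 (dw w) i = norm2 (X i w).
  by move=> w i Hi; rewrite (nth_map 0) ?size_iota // nth_iota.
pose sg := fun (s : {perm 'I_k}) (i : nat) => oapp (fun j : 'I_k => val (s j)) i (insub i).
pose B := fun (s : {perm 'I_k}) (i : nat) => annulus (nth 0 r (sg s i)) eps.
have mB : forall s i, measurable (B s i) by move=> s i; exact: measurable_annulus.
pose U := fun s => [set w | [set k] (N w)] `&` [set w | forall i, (i < k)%N -> B s i (X i w)].
have mXB : forall i (A : set (R * R)), measurable A -> measurable [set w | A (X i w)].
  by move=> i A mA; have := hX i measurableT A mA; rewrite setTI.
have mU : forall s, measurable (U s).
  move=> s; apply: measurableI; first exact: hN.
  have -> : [set w | forall i, (i < k)%N -> B s i (X i w)] =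
     \bigcap_(i in [set i | (i < k)%N]) [set w | B s i (X i w)].
    by apply/seteqP; split => w /= H1.
  by apply: bigcap_measurableType => i _; exact: mXB.
have Eeq : [set w | (Delta_s (orderings r) (measurement N X w) <= eps%:E)%E] =
    \big[setU/set0]_(s <- index_enum {perm 'I_k}) U s.
  apply/seteqP; split => w /=.
  - rewrite /measurement -/(dw w) => /(@event_char R r eps (N w) (dw w) (sdw w) eps0) [kN [s Hs]].
    apply/bigsetU_memP; exists s; first by rewrite mem_index_enum.
    split => // i Hi; rewrite /B /sg insubT /=.
    have := Hs (Ordinal Hi); rewrite nth_dw //; by rewrite -kN.
  - move=> /bigsetU_memP [s _ [/= kN HB]].
    rewrite /measurement -/(dw w); apply/(@event_char R r eps (N w) (dw w) (sdw w) eps0).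
    split => //; exists s => i.
    have := HB i (ltn_ord i); rewrite /B /sg valK /= nth_dw //.
    by rewrite kN.
rewrite Eeq; apply: le_trans (@measure_bigsetU_le R d T P _ (index_enum _) U mU) _.
have pi0 : 0 <= (pi : R) by apply: ltW; exact: pi_gt0.
have m0 : 0 <= m.
  by rewrite /m; apply: mulr_ge0; [apply: mulr_ge0 => //; exact: ltW|apply: exprn_ge0; exact: ltW].
have c0 : (0 <= ((pi * dv ^+ 2)^-1)%:E)%E.
  by rewrite lee_fin invr_ge0; apply: mulr_ge0 => //; apply: exprn_ge0; exact: ltW.
have HU : forall s, (P (U s) <= (m ^+ k * expR (- m) / k`!%:R)%:E *
      \prod_(i < k) (leb2 (annulus (nth 0%R r i) eps) * ((pi * dv ^+ 2)^-1)%:E))%E.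
  move=> s; rewrite /U (hind k [set k] (B s) (mB s)).
  have -> : [set w | [set k] (N w)] = [set w | N w = k] by [].
  rewrite hPN; apply: lee_wpmul2l.
    by rewrite lee_fin divr_ge0 // mulr_ge0 ?exprn_ge0 // expR_ge0.
  rewrite [X in (_ <= X)%E](reindex_inj (@perm_inj _ s)).
  apply: lee_prod_ge0 => i; first exact: measure_ge0.
  rewrite hPX //; apply: lee_wpmul2r => //.
  have -> : B s i = annulus (nth 0 r (s i)) eps by rewrite /B /sg valK.
  rewrite /leb2; apply: le_measure.
  - apply/mem_set.
    have := measurableI _ _ (@measurable_annulus R (r`_(s i)) eps) (@measurable_disk R dv).
    exact.
  - apply/mem_set; have := @measurable_annulus R (r`_(s i)) eps; exact.
  - exact: subIsetl.
apply: le_trans; first by apply: lee_sum => s _; exact: HU.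
rewrite -ge0_sume_distrl; last by move=> s _; rewrite lee_fin divr_ge0 // mulr_ge0 ?exprn_ge0 // expR_ge0.
rewrite sumEFin sumr_const card_Sn.
apply: lee_wpmul2r.
  by apply: prode_ge0 => i _; apply: mule_ge0 => //; rewrite /leb2; exact: measure_ge0.
rewrite lee_fin -[_ *+ k`!]mulr_natr divfK //.
Qed.
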